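(* Let $f:\mathbb{R}^n\to\mathbb{R}^n$ be locally Lipschitz with $f(0)=0$, let $z(t,x)$ denote the solution of $\dot z=f(z)$ with $z(0)=x$, and let $V\in C^1(\mathbb{R}^n;\mathbb{R}^+)$ be a Lyapunov function for $\dot z=f(z)$. Then: (i) There exists a locally Lipschitz positive definite $W:\mathbb{R}^n\to\mathbb{R}^+$ with $W(x)\le-\nabla V(x)f(x)$ for all $x\in\mathbb{R}^n$. (ii) Let $l_f:\mathbb{R}^n\to(0,+\infty)$ be continuous with $l_f(x)\ge\sup\{|f(y)-f(z)|/|y-z|: y\ne z,\ \max\{V(y),V(z)\}\le V(x)\}$ for all $x\ne0$. Then for every $b>0$ there exists a continuous positive definite $\tilde W:\mathbb{R}^n\to\mathbb{R}^+$ such that $V(z(h,x))\le V(x)-h\tilde W(x)$ for all $x\in\mathbb{R}^n$ and all $h\in[0,b/l_f(x)]$. (iii) Let $b>0$, let $l_f$ be as in (ii), let $W$ be a locally Lipschitz positive definite function with $W(x)\le-\nabla V(x)f(x)$ for all $x$, and let $l_W^b:\mathbb{R}^n\to\mathbb{R}^+$ be continuous, positive definite, with $l_W^b(x)\ge\sup\{|W(y)-W(z)|/|y-z|: y\ne z,\ \max\{|y|,|z|\}\le\exp(b)|x|\}$ for all $x\ne0$. If there exist $\varepsilon,c>0$ with $|x|\,l_W^b(x)\le cW(x)$ for all $x\in B_\varepsilon(0)$, then for each $\lambda\in(0,1)$ and each continuous $\varphi:\mathbb{R}^n\to(0,+\infty)$ satisfying $$\varphi(x)\le\min\Big\{\frac{b}{l_f(x)},\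 \frac{(1-\lambda)\exp(-b)W(x)}{|x|\,l_W^b(x)\,l_f(x)}\Big\}\quad\forall x\ne0,$$ one has $V(z(h,x))\le V(x)-\lambda hW(x)$ for all $x\in\mathbb{R}^n$ and $h\in[0,\varphi(x)]$.
   Context: A Lyapunov function for $\dot z=f(z)$ is a positive definite, radially unbounded $V\in C^1(\mathbb{R}^n;\mathbb{R}^+)$ with $\nabla V(x)f(x)<0$ for all $x\ne0$. Positive definite means $V(0)=0$ and $V(x)>0$ for $x\ne0$; radially unbounded means every sublevel set $\{V\le M\}$ is compact. $B_\varepsilon(0)$ is the open ball of radius $\varepsilon$ centered at 0. *)

(* Defs.v *)
From Stdlib Require Import Reals.
From mathcomp Require Import ssreflect ssrbool eqtype ssrnat fintype bigop.
From Stdlib Require List.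

Open Scope R_scope.

Definition vec (n : nat) := 'I_n -> R.

Definition vzero {n} : vec n := fun _ => 0.
Definition vadd {n} (x y : vec n) : vec n := fun i => x i + y i.
Definition vsub {n} (x y : vec n) : vec n := fun i => x i - y i.

Definition dot {n} (x y : vec n) : R := \big[Rplus/0]_(i < n) (x i * y i).
Definition norm {n} (x : vec n) : R := sqrt (dot x x).

Definition ball {n} (c : vec n) (r : R) (y : vec n) : Prop := norm (vsub y c) < r.

Definition is_open {n} (U : vec n -> Prop) : Prop :=
  forall x, U x -> exists r, 0 < r /\ forall y, ball x r y -> U y.

Definition compact {n} (S : vec n -> Prop) : Prop :=
  forall (I : Type) (U : I -> vec n -> Prop),
    (forall i, is_open (U i)) ->
    (forall x, S x -> exists i, U i x) ->
    exists l : list I, forall x, S x -> exists i, List.In i l /\ U i x.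

Definition cont_scalar {n} (g : vec n -> R) : Prop :=
  forall x eps, 0 < eps -> exists delta, 0 < delta /\
    forall y, norm (vsub y x) < delta -> Rabs (g y - g x) < eps.

Definition cont_vec {n m} (g : vec n -> vec m) : Prop :=
  forall x eps, 0 < eps -> exists delta, 0 < delta /\
    forall y, norm (vsub y x) < delta -> norm (vsub (g y) (g x)) < eps.

Definition locally_lipschitz_vec {n m} (g : vec n -> vec m) : Prop :=
  forall x, exists r L, 0 < r /\ forall y z, ball x r y -> ball x r z ->
    norm (vsub (g y) (g z)) <= L * norm (vsub y z).

Definition locally_lipschitz_scalar {n} (g : vec n -> R) : Prop :=
  forall x, exists r L, 0 < r /\ forall y z, ball x r y -> ball x r z ->
    Rabs (g y - g z) <= L * norm (vsub y z).

Definition has_gradient {n} (V : vec n -> R) (gradV : vec n -> vec n) : Prop :=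
  forall x eps, 0 < eps -> exists delta, 0 < delta /\
    forall h, norm h < delta ->
      Rabs (V (vadd x h) - V x - dot (gradV x) h) <= eps * norm h.

Definition C1_with_gradient {n} (V : vec n -> R) (gradV : vec n -> vec n) : Prop :=
  has_gradient V gradV /\ cont_vec gradV.

Definition positive_definite {n} (V : vec n -> R) : Prop :=
  V vzero = 0 /\ forall x, x <> vzero -> 0 < V x.

Definition radially_unbounded {n} (V : vec n -> R) : Prop :=
  forall M, compact (fun x => V x <= M).

Definition lyapunov {n} (f : vec n -> vec n) (V : vec n -> R)
    (gradV : vec n -> vec n) : Prop :=
  C1_with_gradient V gradV /\ (forall x, 0 <= V x) /\
  positive_definite V /\ radially_unbounded V /\
  forall x, x <> vzero -> dot (gradV x) (f x) < 0.

Definition is_solution {n} (f : vec n -> vec n) (gam : R -> vec n) (x : vec n)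
    (h : R) : Prop :=
  gam 0 = x /\
  (forall i t, 0 <= t <= h -> continue_in (fun s => gam s i) (fun s => 0 <= s <= h) t) /\
  (forall i t, 0 < t < h -> derivable_pt_lim (fun s => gam s i) t (f (gam t) i)).

(* Main.v *)
Require Import Defs.
From Stdlib Require Import Reals Lra Psatz FunctionalExtensionality Classical.
From mathcomp Require Import ssreflect ssrbool eqtype ssrnat fintype bigop.
Open Scope R_scope.
Set Implicit Arguments.

From HB Require Import structures.
Lemma RplusA : ssrfun.associative Rplus. Proof. move=> a b c; ring. Qed.
HB.instance Definition _ := Monoid.isComLaw.Build R 0 Rplus RplusA Rplus_comm Rplus_0_l.

Notation SUM n F := (\big[Rplus/0]_(i < n) F i).

Lemma recr n (F : 'I_n.+1 -> R) : \big[Rplus/0]_(i < n.+1) F i = \big[Rplus/0]_(i < n) F (widen_ord (leqnSn n) i) + F ord_max.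
Proof. exact: big_ord_recr. Qed.
Lemma sum0 (F : 'I_0 -> R) : SUM 0 F = 0.
Proof. exact: big_ord0. Qed.


Lemma sum_ext n (F G : 'I_n -> R) : (forall i, F i = G i) -> SUM n F = SUM n G.
Proof. move=> H; apply: eq_bigr => i _; exact: H. Qed.

Lemma sum_plus n (F G : 'I_n -> R) : SUM n (fun i => F i + G i) = SUM n F + SUM n G.
Proof.
elim: n F G => [|n IH] F G.
{ rewrite !sum0; lra. }
rewrite !recr IH; lra.
Qed.

Lemma sum_scal n (F : 'I_n -> R) c : SUM n (fun i => c * F i) = c * SUM n F.
Proof.
elim: n F => [|n IH] F.
{ rewrite !sum0; lra. }
rewrite !recr IH; lra.
Qed.

Lemma sum_opp n (F : 'I_n -> R) : SUM n (fun i => - F i) = - SUM n F.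
Proof.
elim: n F => [|n IH] F.
{ rewrite !sum0; lra. }
rewrite !recr IH; lra.
Qed.

Lemma sum_le n (F G : 'I_n -> R) : (forall i, F i <= G i) -> SUM n F <= SUM n G.
Proof.
elim: n F G => [|n IH] F G H.
{ rewrite !sum0; lra. }
rewrite !recr. apply Rplus_le_compat; [apply IH => i|]; apply H.
Qed.

Lemma sum_nonneg n (F : 'I_n -> R) : (forall i, 0 <= F i) -> 0 <= SUM n F.
Proof.
elim: n F => [|n IH] F H.
{ rewrite sum0; lra. }
rewrite recr. have := H ord_max. have := IH (fun i => F (widen_ord (leqnSn n) i)) (fun i => H _). lra.
Qed.

Lemma sum_abs n (F : 'I_n -> R) : Rabs (SUM n F) <= SUM n (fun i => Rabs (F i)).
Proof.
elim: n F => [|n IH] F.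
{ rewrite !sum0 Rabs_R0; lra. }
rewrite !recr.
eapply Rle_trans; [apply Rabs_triang|]. apply Rplus_le_compat_r. apply IH.
Qed.

Lemma sum_zero_each n (F : 'I_n -> R) : (forall i, 0 <= F i) -> SUM n F = 0 -> forall i, F i = 0.
Proof.
elim: n F => [|n IH] F H S i; first by case: i.
move: S; rewrite recr => S.
have H1 : 0 <= SUM n (fun j => F (widen_ord (leqnSn n) j)) by apply sum_nonneg.
have H2 := H ord_max.
case: (unliftP ord_max i) => [j ->|->].
- have : F (widen_ord (leqnSn n) j) = 0.
    apply (IH (fun j => F (widen_ord (leqnSn n) j))). move=> k; apply H. lra.
  have -> : lift ord_max j = widen_ord (leqnSn n) j by apply: val_inj; rewrite /= /bump leqNgt ltn_ord.
  done.
- lra.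
Qed.

Lemma sum_sq_le n (F : 'I_n -> R) : SUM n (fun i => F i * F i) <= (SUM n (fun i => Rabs (F i)))^2.
Proof.
elim: n F => [|n IH] F.
{ rewrite !sum0; lra. }
rewrite !recr.
have HT := @sum_nonneg n (fun i => Rabs (F (widen_ord (leqnSn n) i))) (fun i => Rabs_pos _).
have HS := IH (fun j => F (widen_ord (leqnSn n) j)).
have HA := Rabs_pos (F ord_max).
have HF : F ord_max * F ord_max = Rabs (F ord_max) * Rabs (F ord_max).
  rewrite -Rabs_mult Rabs_right //; apply Rle_ge; nra.
nra.
Qed.

Lemma dot_comm n (x y : vec n) : dot x y = dot y x.
Proof. rewrite /dot; apply sum_ext => i; ring. Qed.

Lemma dot_self_nonneg n (x : vec n) : 0 <= dot x x.
Proof. rewrite /dot; apply sum_nonneg => i; nra. Qed.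

Lemma dot_lin n (a b c : vec n) s t :
  dot (fun i => s * a i + t * b i) c = s * dot a c + t * dot b c.
Proof.
rewrite /dot -!sum_scal -sum_plus; apply sum_ext => i; ring.
Qed.

Lemma dot_vsub_l n (a b c : vec n) : dot (vsub a b) c = dot a c - dot b c.
Proof.
have -> : vsub a b = (fun i => 1 * a i + (-1) * b i).
  by apply functional_extensionality => i; rewrite /vsub; ring.
rewrite dot_lin; ring.
Qed.

Lemma dot_vsub_r n (a b c : vec n) : dot c (vsub a b) = dot c a - dot c b.
Proof. rewrite dot_comm dot_vsub_l (dot_comm a) (dot_comm b); done. Qed.

Lemma dot_vadd_l n (a b c : vec n) : dot (vadd a b) c = dot a c + dot b c.
Proof.
have -> : vadd a b = (fun i => 1 * a i + 1 * b i).
  by apply functional_extensionality => i; rewrite /vadd; ring.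
rewrite dot_lin; ring.
Qed.

Lemma dot_vadd_r n (a b c : vec n) : dot c (vadd a b) = dot c a + dot c b.
Proof. rewrite dot_comm dot_vadd_l (dot_comm a) (dot_comm b); done. Qed.

Lemma dot_scal_l n (a c : vec n) t : dot (fun i => t * a i) c = t * dot a c.
Proof. rewrite /dot -sum_scal; apply sum_ext => i; ring. Qed.

Lemma dot_scal_r n (a c : vec n) t : dot c (fun i => t * a i) = t * dot c a.
Proof. rewrite dot_comm dot_scal_l dot_comm; done. Qed.

Lemma norm_nonneg n (x : vec n) : 0 <= norm x.
Proof. apply sqrt_pos. Qed.

Lemma norm_sq n (x : vec n) : norm x * norm x = dot x x.
Proof. apply sqrt_sqrt, dot_self_nonneg. Qed.

Lemma CS2 n (x y : vec n) : dot x y * dot x y <= dot x x * dot y y.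
Proof.
set A := dot x x; set B := dot x y; set C := dot y y.
have key : forall t, 0 <= A - 2 * t * B + t * t * C.
  move=> t.
  have E : dot (fun i => 1 * x i + (- t) * y i) (fun i => 1 * x i + (- t) * y i)
           = A - 2 * t * B + t * t * C.
    rewrite dot_lin !(dot_comm _ (fun i => 1 * x i + - t * y i)) !dot_lin.
    rewrite /A /B /C (dot_comm y x). ring.
  rewrite -E. apply dot_self_nonneg.
have HA : 0 <= A by apply dot_self_nonneg.
have HC : 0 <= C by apply dot_self_nonneg.
case: (Req_dec C 0) => HC0.
- case: (Req_dec B 0) => HB0.
  + rewrite HB0 HC0; lra.
  + have := key ((A + 1) / (2 * B)).
    have -> : A - 2 * ((A + 1) / (2 * B)) * B + (A + 1) / (2 * B) * ((A + 1) / (2 * B)) * C = -1.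
      rewrite HC0; field; auto.
    lra.
- have := key (B / C).
  have -> : A - 2 * (B / C) * B + B / C * (B / C) * C = (A * C - B * B) / C by field.
  move=> H.
  have HC' : 0 < C by lra.
  have : 0 <= A * C - B * B.
    have := Rmult_le_compat_r C _ _ (Rlt_le _ _ HC') H.
    rewrite Rmult_0_l /Rdiv Rmult_assoc Rinv_l; lra.
  lra.
Qed.

Lemma CS n (x y : vec n) : Rabs (dot x y) <= norm x * norm y.
Proof.
rewrite /norm -sqrt_mult; try apply dot_self_nonneg.
rewrite -sqrt_Rsqr_abs. apply sqrt_le_1_alt. rewrite /Rsqr. apply CS2.
Qed.

Lemma dot_le_norm n (x y : vec n) : dot x y <= norm x * norm y.
Proof. eapply Rle_trans; [apply Rle_abs|apply CS]. Qed.

Lemma norm_triang n (a b : vec n) : norm (vadd a b) <= norm a + norm b.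
Proof.
have H1 : dot (vadd a b) (vadd a b) = dot a a + 2 * dot a b + dot b b.
  rewrite dot_vadd_l !dot_vadd_r (dot_comm b a); ring.
have Ha := norm_nonneg a. have Hb := norm_nonneg b.
have H2 : dot (vadd a b) (vadd a b) <= (norm a + norm b) * (norm a + norm b).
  rewrite H1 -(norm_sq a) -(norm_sq b). have := dot_le_norm a b. nra.
rewrite /norm. rewrite -(sqrt_Rsqr (sqrt (dot a a) + sqrt (dot b b))).
  apply sqrt_le_1_alt. exact H2.
rewrite /norm in Ha Hb; lra.
Qed.

Lemma vsub_split n (x y z : vec n) : vsub x z = vadd (vsub x y) (vsub y z).
Proof. apply functional_extensionality => i; rewrite /vsub /vadd; ring. Qed.

Lemma norm_vsub_triang n (x y z : vec n) : norm (vsub x z) <= norm (vsub x y) + norm (vsub y z).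
Proof. rewrite (vsub_split x y z); apply norm_triang. Qed.

Lemma norm_opp n (x : vec n) : norm (fun i => - x i) = norm x.
Proof. rewrite /norm /dot; f_equal; apply sum_ext => i; ring. Qed.

Lemma norm_vsub_sym n (x y : vec n) : norm (vsub x y) = norm (vsub y x).
Proof.
rewrite -norm_opp; f_equal; apply functional_extensionality => i; rewrite /vsub; ring.
Qed.

Lemma vsub_zero n (x : vec n) : vsub x vzero = x.
Proof. apply functional_extensionality => i; rewrite /vsub /vzero; ring. Qed.

Lemma vzero_sub n (x : vec n) : vsub vzero x = (fun i => - x i).
Proof. apply functional_extensionality => i; rewrite /vsub /vzero; ring. Qed.

Lemma vadd_vsub n (x y : vec n) : vadd x (vsub y x) = y.
Proof. apply functional_extensionality => i; rewrite /vsub /vadd; ring. Qed.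

Lemma vsub_self n (x : vec n) : vsub x x = vzero.
Proof. apply functional_extensionality => i; rewrite /vsub /vzero; ring. Qed.

Lemma norm_zero n : norm (@vzero n) = 0.
Proof.
rewrite /norm /dot. have -> : SUM n (fun i => @vzero n i * @vzero n i) = 0.
  elim: n => [|n IH]; first by rewrite sum0.
  rewrite recr /vzero. rewrite /vzero in IH. rewrite IH; ring.
apply sqrt_0.
Qed.

Lemma norm_eq0 n (x : vec n) : norm x = 0 -> x = vzero.
Proof.
move=> H. have : dot x x = 0 by rewrite -norm_sq H; ring.
rewrite /dot => H2.
apply functional_extensionality => i.
have := sum_zero_each (fun i => x i * x i) (fun i => ltac:(nra)) H2 i.
rewrite /vzero; nra.
Qed.

Lemma norm_pos n (x : vec n) : x <> vzero -> 0 < norm x.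
Proof.
move=> H. case: (norm_nonneg x) => // H'. exfalso; apply H, norm_eq0; auto.
Qed.

Lemma norm_le_sumabs n (v : vec n) : norm v <= SUM n (fun i => Rabs (v i)).
Proof.
rewrite /norm /dot.
have HT : 0 <= SUM n (fun i => Rabs (v i)) by apply sum_nonneg => i; apply Rabs_pos.
rewrite -(sqrt_Rsqr (SUM n (fun i => Rabs (v i)))) //.
apply sqrt_le_1_alt. rewrite /Rsqr. have := sum_sq_le v. rewrite /pow. lra.
Qed.

Lemma norm_rev_triang n (a b : vec n) : Rabs (norm a - norm b) <= norm (vsub a b).
Proof.
have H1 := norm_vsub_triang a b vzero. have H2 := norm_vsub_triang b a vzero.
rewrite !vsub_zero in H1 H2. rewrite norm_vsub_sym in H2.
apply Rabs_le; lra.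
Qed.

Lemma sum_ge_term n (F : 'I_n -> R) i : (forall j, 0 <= F j) -> F i <= SUM n F.
Proof.
elim: n F i => [|n IH] F i H; first by case: i.
rewrite recr.
have H1 := @sum_nonneg n (fun j => F (widen_ord (leqnSn n) j)) (fun j => H _).
have H2 := H ord_max.
case: (unliftP ord_max i) => [j ->|->].
- have -> : lift ord_max j = widen_ord (leqnSn n) j by apply: val_inj; rewrite /= /bump leqNgt ltn_ord.
  have := IH (fun j => F (widen_ord (leqnSn n) j)) j (fun k => H _). lra.
- lra.
Qed.

Lemma abs_comp_le_norm n (v : vec n) i : Rabs (v i) <= norm v.
Proof.
rewrite /norm /dot.
rewrite -sqrt_Rsqr_abs. apply sqrt_le_1_alt. rewrite /Rsqr.
apply (sum_ge_term (fun j => v j * v j)) => j; nra.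
Qed.

Definition Einf n (F : vec n -> R) (r : R) : Prop := exists y, r = - Rmax 0 (F y).

Lemma Einf_bound n (F : vec n -> R) : bound (Einf F).
Proof.
exists 0 => r [y ->]. have := Rmax_l 0 (F y). lra.
Qed.

Lemma Einf_ne n (F : vec n -> R) : exists r, Einf F r.
Proof. exists (- Rmax 0 (F vzero)), vzero; done. Qed.

Definition inf0 n (F : vec n -> R) : R :=
  - proj1_sig (completeness (Einf F) (Einf_bound F) (Einf_ne F)).

Lemma inf0_le n (F : vec n -> R) y : inf0 F <= Rmax 0 (F y).
Proof.
rewrite /inf0. case: (completeness _ _ _) => m [Hub _] /=.
have := Hub (- Rmax 0 (F y)) ltac:(exists y; reflexivity). lra.
Qed.

Lemma inf0_ge n (F : vec n -> R) c : (forall y, c <= Rmax 0 (F y)) -> c <= inf0 F.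
Proof.
move=> H. rewrite /inf0. case: (completeness _ _ _) => m [_ Hl] /=.
have : m <= - c.
  apply Hl => r [y ->]. have := H y. lra.
lra.
Qed.

Lemma inf0_nonneg n (F : vec n -> R) : 0 <= inf0 F.
Proof. apply inf0_ge => y; apply Rmax_l. Qed.

Lemma inf0_mono n (F G : vec n -> R) d : 0 <= d -> (forall y, F y <= G y + d) -> inf0 F <= inf0 G + d.
Proof.
move=> Hd H.
have : inf0 F - d <= inf0 G.
  apply inf0_ge => y.
  have H1 := inf0_le F y. have := H y.
  move=> Hy. have : Rmax 0 (F y) <= Rmax 0 (G y) + d.
    apply Rmax_lub. have := Rmax_l 0 (G y); lra. have := Rmax_r 0 (G y); lra.
  lra.
lra.
Qed.

Lemma Rmax0_id x : 0 <= x -> Rmax 0 x = x.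
Proof. move=> H; apply Rmax_right; lra. Qed.

Lemma cont_dot n (A B : vec n -> vec n) : cont_vec A -> cont_vec B -> cont_scalar (fun x => dot (A x) (B x)).
Proof.
move=> HA HB x eps Heps.
set a0 := norm (A x). set b0 := norm (B x).
have Ha0 : 0 <= a0 by apply norm_nonneg.
have Hb0 : 0 <= b0 by apply norm_nonneg.
have [d1 [Hd1 H1]] := HA x (eps / (2 * (b0 + 1))) ltac:(apply Rdiv_lt_0_compat; lra).
have [d2 [Hd2 H2]] := HB x (Rmin 1 (eps / (2 * (a0 + 1)))) ltac:(apply Rmin_pos; [lra|apply Rdiv_lt_0_compat; lra]).
exists (Rmin d1 d2); split; first by apply Rmin_pos.
move=> y Hy.
have Hy1 : norm (vsub y x) < d1 by have := Rmin_l d1 d2; lra.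
have Hy2 : norm (vsub y x) < d2 by have := Rmin_r d1 d2; lra.
have E1 := H1 y Hy1. have E2 := H2 y Hy2.
have E2a : norm (vsub (B y) (B x)) < 1 by have := Rmin_l 1 (eps / (2 * (a0 + 1))); lra.
have E2b : norm (vsub (B y) (B x)) < eps / (2 * (a0 + 1)) by have := Rmin_r 1 (eps / (2 * (a0 + 1))); lra.
have Edec : dot (A y) (B y) - dot (A x) (B x) = dot (vsub (A y) (A x)) (B y) + dot (A x) (vsub (B y) (B x)).
  rewrite dot_vsub_l dot_vsub_r; ring.
rewrite Edec.
have Hby : norm (B y) <= b0 + 1.
  have := norm_vsub_triang (B y) (B x) vzero. rewrite !vsub_zero. rewrite /b0; lra.
have C1 := CS (vsub (A y) (A x)) (B y).
have C2 := CS (A x) (vsub (B y) (B x)).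
have N1 := norm_nonneg (vsub (A y) (A x)).
have N2 := norm_nonneg (vsub (B y) (B x)).
have N3 := norm_nonneg (B y).
have T1 : norm (vsub (A y) (A x)) * norm (B y) <= eps / (2 * (b0 + 1)) * (b0 + 1).
  apply Rmult_le_compat; lra.
have T2 : a0 * norm (vsub (B y) (B x)) <= (a0 + 1) * (eps / (2 * (a0 + 1))).
  apply Rmult_le_compat; lra.
have T1' : eps / (2 * (b0 + 1)) * (b0 + 1) = eps / 2 by field; lra.
have T2' : (a0 + 1) * (eps / (2 * (a0 + 1))) = eps / 2 by field; lra.
have T3 : a0 * norm (vsub (B y) (B x)) < eps / 2 \/ a0 = 0.
  case: (Req_dec a0 0) => Hz; [by right|left].
  have : a0 * norm (vsub (B y) (B x)) < a0 * (eps / (2 * (a0 + 1))) by apply Rmult_lt_compat_l; lra.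
  have : a0 * (eps / (2 * (a0 + 1))) <= (a0 + 1) * (eps / (2 * (a0 + 1))).
    apply Rmult_le_compat_r; [apply Rlt_le, Rdiv_lt_0_compat; lra| lra].
  lra.
have T4 : norm (vsub (A y) (A x)) * norm (B y) < eps / 2 \/ norm (vsub (A y) (A x)) * norm (B y) <= eps/2.
  by right; lra.
eapply Rle_lt_trans; [apply Rabs_triang|].
rewrite -/a0 in C2.
case: T3 => T3.
- have : norm (vsub (A y) (A x)) * norm (B y) < eps / 2.
    case: (Req_dec (norm (B y)) 0) => Hz. rewrite Hz; lra.
    have : norm (vsub (A y) (A x)) * norm (B y) < eps / (2 * (b0 + 1)) * norm (B y).
      apply Rmult_lt_compat_r; lra.
    have : eps / (2 * (b0 + 1)) * norm (B y) <= eps / (2 * (b0 + 1)) * (b0 + 1).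
      apply Rmult_le_compat_l; [apply Rlt_le, Rdiv_lt_0_compat; lra|lra].
    lra.
  lra.
- rewrite T3 in C2. have : norm (vsub (A y) (A x)) * norm (B y) < eps.
    lra.
  lra.
Qed.

Lemma lip_cont n (f : vec n -> vec n) : locally_lipschitz_vec f -> cont_vec f.
Proof.
move=> Hf x eps Heps.
have [r [L [Hr HL]]] := Hf x.
exists (Rmin r (eps / (Rabs L + 1))); split.
  apply Rmin_pos; [lra|apply Rdiv_lt_0_compat; have := Rabs_pos L; lra].
move=> y Hy.
have Hy1 : norm (vsub y x) < r by have := Rmin_l r (eps / (Rabs L + 1)); lra.
have Hy2 : norm (vsub y x) < eps / (Rabs L + 1) by have := Rmin_r r (eps / (Rabs L + 1)); lra.
have Hxx : ball x r x by rewrite /ball vsub_self norm_zero.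
have := HL y x Hy1 Hxx.
have HLa := Rle_abs L. have HLp := Rabs_pos L.
have N := norm_nonneg (vsub y x).
have : L * norm (vsub y x) <= Rabs L * norm (vsub y x) by apply Rmult_le_compat_r.
have : Rabs L * norm (vsub y x) <= Rabs L * (eps / (Rabs L + 1)) by apply Rmult_le_compat_l; lra.
have : Rabs L * (eps / (Rabs L + 1)) < eps.
  have -> : Rabs L * (eps / (Rabs L + 1)) = eps - eps / (Rabs L + 1) by field; lra.
  have : 0 < eps / (Rabs L + 1) by apply Rdiv_lt_0_compat; lra.
  lra.
lra.
Qed.

Lemma grad_cont n (V : vec n -> R) gV : has_gradient V gV -> cont_scalar V.
Proof.
move=> HV x eps Heps.
have [d [Hd H]] := HV x 1 Rlt_0_1.
set G := norm (gV x).
have HG : 0 <= G by apply norm_nonneg.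
exists (Rmin d (eps / (G + 2))); split.
  apply Rmin_pos; [lra|apply Rdiv_lt_0_compat; lra].
move=> y Hy.
have Hy1 : norm (vsub y x) < d by have := Rmin_l d (eps / (G + 2)); lra.
have Hy2 : norm (vsub y x) < eps / (G + 2) by have := Rmin_r d (eps / (G + 2)); lra.
have := H (vsub y x) Hy1. rewrite vadd_vsub => E.
have C := CS (gV x) (vsub y x).
have N := norm_nonneg (vsub y x).
have : (G + 1) * norm (vsub y x) <= (G + 1) * (eps / (G + 2)) by apply Rmult_le_compat_l; lra.
have : (G + 1) * (eps / (G + 2)) < eps.
  have -> : (G + 1) * (eps / (G + 2)) = eps - eps / (G + 2) by field; lra.
  have : 0 < eps / (G + 2) by apply Rdiv_lt_0_compat; lra.
  lra.
rewrite -/G in C.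
move=> H1 H2.
have := Rabs_triang (V y - V x - dot (gV x) (vsub y x)) (dot (gV x) (vsub y x)).
have -> : V y - V x - dot (gV x) (vsub y x) + dot (gV x) (vsub y x) = V y - V x by ring.
lra.
Qed.

Lemma norm_cont n : cont_scalar (@norm n).
Proof.
move=> x eps Heps. exists eps; split => // y Hy.
eapply Rle_lt_trans; [apply norm_rev_triang|done].
Qed.

Lemma dot_zero_r n (a : vec n) : dot a vzero = 0.
Proof.
have := dot_scal_r (@vzero n) a 0.
have -> : (fun i => 0 * @vzero n i) = vzero by apply functional_extensionality => i; rewrite /vzero; ring.
lra.
Qed.

Lemma part_i_gen n (g : vec n -> R) : cont_scalar g -> (forall x, 0 <= g x) -> g vzero = 0 ->
  (forall x, x <> vzero -> 0 < g x) ->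
  exists W : vec n -> R,
     locally_lipschitz_scalar W /\ positive_definite W /\ (forall x, 0 <= W x) /\
     forall x, W x <= g x.
Proof.
move=> Hc Hn H0 Hp.
set W := fun x => inf0 (fun y => g y + norm (vsub x y)).
have Wle : forall x, W x <= g x.
  move=> x. have := inf0_le (fun y => g y + norm (vsub x y)) x.
  rewrite vsub_self norm_zero Rplus_0_r Rmax0_id //.
have Wnn : forall x, 0 <= W x by move=> x; apply inf0_nonneg.
exists W; split; [|split; [split|split]] => //.
- move=> x; exists 1, 1; split; first lra.
  move=> y z _ _.
  have key : forall a b : vec n, W a <= W b + norm (vsub a b).
    move=> a b. apply inf0_mono; first by apply norm_nonneg.
    move=> y0. have := norm_vsub_triang a b y0. lra.
  have := key y z. have := key z y. rewrite (norm_vsub_sym z y).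
  move=> H1 H2. rewrite Rmult_1_l. apply Rabs_le; lra.
- have := Wle vzero. have := Wnn vzero. rewrite H0. lra.
- move=> x Hx.
  have Hgx := Hp x Hx.
  have [d [Hd Hdd]] := Hc x (g x / 2) ltac:(lra).
  apply Rlt_le_trans with (Rmin (g x / 2) d); first by apply Rmin_pos; lra.
  apply inf0_ge => y.
  rewrite Rmax0_id; last by have := Hn y; have := norm_nonneg (vsub x y); lra.
  have Nn := norm_nonneg (vsub x y). have := Hn y.
  case: (Rlt_le_dec (norm (vsub y x)) d) => Hy.
  + have := Hdd y Hy. move/Rabs_def2 => [H1 H2].
    have := Rmin_l (g x / 2) d. lra.
  + rewrite norm_vsub_sym in Hy. have := Rmin_r (g x / 2) d. lra.
Qed.

Lemma dist_self x : dist R_met x x = 0.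
Proof. simpl; rewrite /R_dist Rminus_diag_eq // Rabs_R0 //. Qed.
Lemma dist_eq x y : dist R_met x y = Rabs (x - y).
Proof. done. Qed.

Definition cwin (F : R -> R) (a b t : R) : Prop := limit1_in F (fun s => a <= s <= b) (F t) t.

Lemma cwin_of_cont_in F a b t : continue_in F (fun s => a <= s <= b) t -> cwin F a b t.
Proof.
move=> H eps Heps. have [d [Hd Hdd]] := H eps Heps.
exists d; split => // s [Hs Hst].
case: (Req_dec s t) => E.
- rewrite E dist_self; lra.
- apply Hdd; split => //. split => //. by auto.
Qed.

Lemma cwin_of_cont F a b t : continuity_pt F t -> cwin F a b t.
Proof.
move=> H eps Heps. have [d [Hd Hdd]] := H eps Heps.
exists d; split => // s [Hs Hst].
case: (Req_dec s t) => E.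
- rewrite E dist_self; lra.
- apply Hdd; split => //. split => //. by auto.
Qed.

Lemma cwin_sub F a b a' b' t : a <= a' -> b' <= b -> cwin F a b t -> cwin F a' b' t.
Proof.
move=> H1 H2 H eps Heps. have [d [Hd Hdd]] := H eps Heps.
exists d; split => // s [Hs Hst]. apply Hdd; split => //; lra.
Qed.

Lemma cwin_plus F G a b t : cwin F a b t -> cwin G a b t -> cwin (fun s => F s + G s) a b t.
Proof. move=> H1 H2; apply limit_plus => //. Qed.

Lemma cwin_mult F G a b t : cwin F a b t -> cwin G a b t -> cwin (fun s => F s * G s) a b t.
Proof. move=> H1 H2; apply limit_mul => //. Qed.

Lemma cwin_opp F a b t : cwin F a b t -> cwin (fun s => - F s) a b t.
Proof. move=> H1; apply limit_Ropp => //. Qed.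

Lemma cwin_const c a b t : cwin (fun _ => c) a b t.
Proof. move=> eps Heps; exists 1; split; first lra. move=> s _. rewrite dist_self; lra. Qed.

Lemma cwin_id a b t : cwin (fun s => s) a b t.
Proof. move=> eps Heps; exists eps; split => // s [_ H]. done. Qed.

Lemma cwin_ext F G a b t : (forall s, F s = G s) -> cwin F a b t -> cwin G a b t.
Proof.
move=> E H. have -> : G = F by apply functional_extensionality => s; rewrite E. done.
Qed.

Lemma deriv_ext F G t l : (forall s, F s = G s) -> derivable_pt_lim F t l -> derivable_pt_lim G t l.
Proof.
move=> E H. have -> : G = F by apply functional_extensionality => s; rewrite E. done.
Qed.

Lemma mono (F F' : R -> R) a b : a <= b ->
  (forall t, a <= t <= b -> cwin F a b t) ->
  (forall t, a < t < b -> derivable_pt_lim F t (F' t)) ->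
  (forall t, a < t < b -> F' t <= 0) -> F b <= F a.
Proof.
move=> Hab Hc Hd Hn.
case: (Req_dec a b) => Eab; first by rewrite Eab; lra.
have Hlt : a < b by lra.
apply Rnot_lt_le => Hbad.
set eps := (F b - F a) / 4.
have Heps : 0 < eps by rewrite /eps; lra.
have [d1 [Hd1 H1]] := Hc a ltac:(lra) eps Heps.
have [d2 [Hd2 H2]] := Hc b ltac:(lra) eps Heps.
set dl := Rmin (Rmin d1 d2) ((b - a) / 3) / 2.
have Hdl : 0 < dl.
  rewrite /dl. have : 0 < Rmin (Rmin d1 d2) ((b - a) / 3) by repeat apply Rmin_pos; lra. lra.
have Hdl1 : dl < d1.
  rewrite /dl. have := Rmin_l (Rmin d1 d2) ((b - a) / 3). have := Rmin_l d1 d2.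
  have : 0 < Rmin (Rmin d1 d2) ((b - a) / 3) by repeat apply Rmin_pos; lra. lra.
have Hdl2 : dl < d2.
  rewrite /dl. have := Rmin_l (Rmin d1 d2) ((b - a) / 3). have := Rmin_r d1 d2.
  have : 0 < Rmin (Rmin d1 d2) ((b - a) / 3) by repeat apply Rmin_pos; lra. lra.
have Hdl3 : dl < (b - a) / 3.
  rewrite /dl. have := Rmin_r (Rmin d1 d2) ((b - a) / 3).
  have : 0 < Rmin (Rmin d1 d2) ((b - a) / 3) by repeat apply Rmin_pos; lra. lra.
have [c [Ec Hc']] := MVT_cor2 F F' (a + dl) (b - dl) ltac:(lra)
   (fun c Hc => Hd c ltac:(lra)).
have := Hn c ltac:(lra).
have E1 := H1 (a + dl) ltac:(split; [lra| rewrite dist_eq; rewrite Rabs_right; lra]).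
have E2 := H2 (b - dl) ltac:(split; [lra| rewrite dist_eq; rewrite Rabs_left; lra]).
rewrite !dist_eq in E1 E2. move/Rabs_def2: E1 => [E1 E1']. move/Rabs_def2: E2 => [E2 E2'].
move=> Hn'.
have Hp : 0 < b - dl - (a + dl) by lra.
have : F' c * (b - dl - (a + dl)) <= 0 by nra.
rewrite /eps in E1 E1' E2 E2'. lra.
Qed.

Lemma lift_max_widen n (j : 'I_n) : lift ord_max j = widen_ord (leqnSn n) j.
Proof. apply: val_inj; rewrite /= /bump leqNgt ltn_ord //. Qed.

Lemma fin_min n (P : 'I_n -> R -> Prop) :
  (forall i d d', 0 < d' <= d -> P i d -> P i d') ->
  (forall i, exists d, 0 < d /\ P i d) -> exists d, 0 < d /\ forall i, P i d.
Proof.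
elim: n P => [|n IH] P Hm He.
- exists 1; split; [lra|by case].
- have [d1 [Hd1 H1]] := IH (fun j => P (widen_ord (leqnSn n) j)) (fun j => Hm _) (fun j => He _).
  have [d2 [Hd2 H2]] := He ord_max.
  exists (Rmin d1 d2); split; first by apply Rmin_pos.
  move=> i. case: (unliftP ord_max i) => [j ->|->].
  + rewrite lift_max_widen. apply: (Hm _ d1); last by apply H1.
    split; [by apply Rmin_pos|apply Rmin_l].
  + apply: (Hm _ d2) => //. split; [by apply Rmin_pos|apply Rmin_r].
Qed.

Lemma sum_const n c : SUM n (fun _ => c) = INR n * c.
Proof.
elim: n => [|n IH]; first by rewrite sum0 /=; ring.
rewrite recr IH S_INR; ring.
Qed.

Lemma deriv_sum n (Fi : 'I_n -> R -> R) (Di : 'I_n -> R) t :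
  (forall i, derivable_pt_lim (Fi i) t (Di i)) ->
  derivable_pt_lim (fun s => SUM n (fun i => Fi i s)) t (SUM n Di).
Proof.
elim: n Fi Di => [|n IH] Fi Di H.
- rewrite sum0.
  have E : forall s, fct_cte 0 s = SUM 0 (fun i => Fi i s) by move=> s; rewrite sum0.
  exact (@deriv_ext _ _ t 0 E (derivable_pt_lim_const 0 t)).
- rewrite recr.
  have E : forall s, SUM n (fun i => Fi (widen_ord (leqnSn n) i) s) + Fi ord_max s = SUM n.+1 (fun i => Fi i s).
    move=> s; rewrite recr //.
  apply (@deriv_ext _ _ t _ E).
  apply: (derivable_pt_lim_plus (fun s => SUM n (fun i => Fi (widen_ord (leqnSn n) i) s)) (Fi ord_max)); last by apply H.
  apply (IH (fun i => Fi (widen_ord (leqnSn n) i))) => i; apply H.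
Qed.

Lemma cwin_sum n (Fi : 'I_n -> R -> R) a b t :
  (forall i, cwin (Fi i) a b t) -> cwin (fun s => SUM n (fun i => Fi i s)) a b t.
Proof.
elim: n Fi => [|n IH] Fi H.
- apply (@cwin_ext (fun _ => 0)); last by apply cwin_const. move=> s; rewrite sum0 //.
- apply (@cwin_ext (fun s => SUM n (fun i => Fi (widen_ord (leqnSn n) i) s) + Fi ord_max s)).
    move=> s; rewrite recr //.
  apply: cwin_plus; last by apply H.
  apply (IH (fun i => Fi (widen_ord (leqnSn n) i))) => i; apply H.
Qed.

Lemma deriv_dot_l n (u : vec n) (G : R -> vec n) (D : vec n) t :
  (forall i, derivable_pt_lim (fun s => G s i) t (D i)) ->
  derivable_pt_lim (fun s => dot u (G s)) t (dot u D).
Proof.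
move=> H. rewrite /dot.
apply (deriv_sum (fun i s => u i * G s i) (fun i => u i * D i)) => i.
apply derivable_pt_lim_scal with (f := fun s => G s i). apply H.
Qed.

Lemma deriv_dot_self n (G : R -> vec n) (D : vec n) t :
  (forall i, derivable_pt_lim (fun s => G s i) t (D i)) ->
  derivable_pt_lim (fun s => dot (G s) (G s)) t (2 * dot (G t) D).
Proof.
move=> H.
have -> : 2 * dot (G t) D = SUM n (fun i => D i * G t i + G t i * D i).
  rewrite /dot -sum_scal; apply sum_ext => i; ring.
rewrite /dot.
apply (deriv_sum (fun i s => G s i * G s i)) => i.
apply derivable_pt_lim_mult with (f1 := fun s => G s i) (f2 := fun s => G s i); apply H.
Qed.

Lemma cwin_dot_l n (u : vec n) (G : R -> vec n) a b t :
  (forall i, cwin (fun s => G s i) a b t) -> cwin (fun s => dot u (G s)) a b t.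
Proof.
move=> H. rewrite /dot. apply (cwin_sum (fun i s => u i * G s i)) => i.
apply cwin_mult; [apply cwin_const|apply H].
Qed.

Lemma cwin_dot_self n (G : R -> vec n) a b t :
  (forall i, cwin (fun s => G s i) a b t) -> cwin (fun s => dot (G s) (G s)) a b t.
Proof.
move=> H. rewrite /dot. apply (cwin_sum (fun i s => G s i * G s i)) => i.
apply cwin_mult; apply H.
Qed.

Lemma cwin_vec n (G : R -> vec n) a b t :
  (forall i, cwin (fun s => G s i) a b t) ->
  forall eps, 0 < eps -> exists d, 0 < d /\ forall s, a <= s <= b -> Rabs (s - t) < d ->
     norm (vsub (G s) (G t)) < eps.
Proof.
move=> H eps Heps.
have He : 0 < eps / (INR n + 1) by apply Rdiv_lt_0_compat; have := pos_INR n; lra.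
have [d [Hd Hdd]] := fin_min (fun i d => forall s, a <= s <= b -> Rabs (s - t) < d ->
     Rabs (G s i - G t i) < eps / (INR n + 1))
   ltac:(move=> i d d' [H1 H2] Hp s Hs Hst; apply Hp => //; lra)
   ltac:(move=> i; have [d [Hd Hdd]] := H i _ He; exists d; split => // s Hs Hst; apply (Hdd s); split => //).
exists d; split => // s Hs Hst.
eapply Rle_lt_trans; [apply norm_le_sumabs|].
apply Rle_lt_trans with (SUM n (fun _ => eps / (INR n + 1))).
  apply sum_le => i. rewrite /vsub. apply Rlt_le, Hdd => //.
rewrite sum_const.
have -> : INR n * (eps / (INR n + 1)) = eps - eps / (INR n + 1) by field; have := pos_INR n; lra.
lra.
Qed.

Lemma cwin_comp n (g : vec n -> R) (G : R -> vec n) a b t :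
  cont_scalar g -> (forall i, cwin (fun s => G s i) a b t) -> cwin (fun s => g (G s)) a b t.
Proof.
move=> Hg H eps Heps.
have [d1 [Hd1 H1]] := Hg (G t) eps Heps.
have [d2 [Hd2 H2]] := @cwin_vec n G a b t H d1 Hd1.
exists d2; split => // s [Hs Hst]. rewrite dist_eq. apply H1, H2 => //.
Qed.

Lemma norm_scal n (D : vec n) h : norm (fun i => h * D i) = Rabs h * norm D.
Proof.
rewrite /norm dot_scal_l dot_scal_r -Rmult_assoc sqrt_mult.
- rewrite -sqrt_Rsqr_abs //.
- nra.
- apply dot_self_nonneg.
Qed.

Lemma deriv_chain n (V : vec n -> R) gV (G : R -> vec n) (D : vec n) t :
  has_gradient V gV -> (forall i, derivable_pt_lim (fun s => G s i) t (D i)) ->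
  derivable_pt_lim (fun s => V (G s)) t (dot (gV (G t)) D).
Proof.
move=> HV HG eps Heps.
set Gr := gV (G t). set a := norm Gr. set c := norm D.
have Ha : 0 <= a by apply norm_nonneg.
have Hc : 0 <= c by apply norm_nonneg.
have HnN := pos_INR n.
set m := Rmin 1 (eps / (2 * (a + 1))).
have Hm : 0 < m by apply Rmin_pos; [lra|apply Rdiv_lt_0_compat; lra].
have Hm1 : m <= 1 by apply Rmin_l.
have Hm2 : m <= eps / (2 * (a + 1)) by apply Rmin_r.
set e := m / (INR n + 1).
have He : 0 < e by apply Rdiv_lt_0_compat; lra.
have Hne : INR n * e <= m.
  rewrite /e. have -> : INR n * (m / (INR n + 1)) = m - m / (INR n + 1) by field; lra.
  have : 0 < m / (INR n + 1) by apply Rdiv_lt_0_compat; lra. lra.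
set eps1 := eps / (2 * (c + 2)).
have Heps1 : 0 < eps1 by apply Rdiv_lt_0_compat; lra.
have [dF [HdF HF]] := HV (G t) eps1 Heps1.
have [dc [Hdc Hcomp]] := fin_min (fun i d => forall h, h <> 0 -> Rabs h < d ->
    Rabs ((G (t + h) i - G t i) / h - D i) < e)
  ltac:(move=> i d d' [H1 H2] Hp h Hh Hhd; apply Hp => //; lra)
  ltac:(move=> i; have [dd Hdd] := HG i e He; exists dd; split; [apply cond_pos|exact Hdd]).
have Hd : 0 < Rmin dc (dF / (c + 2)) by apply Rmin_pos; [lra|apply Rdiv_lt_0_compat; lra].
exists (mkposreal _ Hd) => h Hh0 Hh /=.
have Hh1 : Rabs h < dc by have := Rmin_l dc (dF / (c + 2)); simpl in Hh; lra.
have Hh2 : Rabs h < dF / (c + 2) by have := Rmin_r dc (dF / (c + 2)); simpl in Hh; lra.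
have Hhp : 0 < Rabs h by apply Rabs_pos_lt.
set Dl := vsub (G (t + h)) (G t).
set Rv := fun i => Dl i - h * D i.
have HR : forall i, Rabs (Rv i) <= e * Rabs h.
  move=> i. have := Hcomp i h Hh0 Hh1.
  have -> : Rv i = h * ((G (t + h) i - G t i) / h - D i) by rewrite /Rv /Dl /vsub; field.
  rewrite Rabs_mult. move=> H. have := Rabs_pos h. have := Rabs_pos ((G (t + h) i - G t i) / h - D i). nra.
have HnR : norm Rv <= m * Rabs h.
  eapply Rle_trans; [apply norm_le_sumabs|].
  eapply Rle_trans; [apply (@sum_le n _ (fun _ => e * Rabs h)); exact HR|].
  rewrite sum_const. nra.
have EDl : Dl = vadd (fun i => h * D i) Rv.
  apply functional_extensionality => i; rewrite /vadd /Rv; ring.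
have HnDl : norm Dl <= Rabs h * (c + 1).
  rewrite EDl. eapply Rle_trans; [apply norm_triang|]. rewrite norm_scal -/c. nra.
have HnDl2 : norm Dl < dF.
  have : Rabs h * (c + 1) < dF.
    have : Rabs h * (c + 2) < dF.
      have := Rmult_lt_compat_r (c + 2) _ _ ltac:(lra) Hh2.
      have -> : dF / (c + 2) * (c + 2) = dF by field; lra. done.
    nra.
  lra.
have HFr := HF Dl HnDl2.
rewrite /Dl vadd_vsub in HFr.
have Edot : dot Gr (vsub (G (t + h)) (G t)) = h * dot Gr D + dot Gr Rv.
  rewrite -/Dl EDl dot_vadd_r dot_scal_r //.
rewrite -/Gr Edot in HFr.
have Hdr : Rabs (dot Gr Rv) <= a * (m * Rabs h).
  eapply Rle_trans; [apply CS|]. rewrite -/a. apply Rmult_le_compat_l => //.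
have Hq : Rabs (V (G (t + h)) - V (G t) - h * dot Gr D) < eps * Rabs h.
  have -> : V (G (t + h)) - V (G t) - h * dot Gr D =
           (V (G (t + h)) - V (G t) - (h * dot Gr D + dot Gr Rv)) + dot Gr Rv by ring.
  eapply Rle_lt_trans; [apply Rabs_triang|].
  have T1 : eps1 * norm Dl <= eps1 * (Rabs h * (c + 1)) by apply Rmult_le_compat_l; lra.
  have T2 : eps1 * (Rabs h * (c + 1)) < eps / 2 * Rabs h.
    rewrite /eps1.
    have -> : eps / (2 * (c + 2)) * (Rabs h * (c + 1)) = (eps / 2 * Rabs h) * ((c + 1) / (c + 2)) by field; lra.
    have : (c + 1) / (c + 2) < 1.
      apply (Rmult_lt_reg_r (c + 2)); first lra.
      have -> : (c + 1) / (c + 2) * (c + 2) = c + 1 by field; lra. lra.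
    have : 0 < eps / 2 * Rabs h by nra.
    nra.
  have T3 : a * (m * Rabs h) <= eps / 2 * Rabs h.
    have : a * m <= eps / 2.
      have : a * m <= a * (eps / (2 * (a + 1))) by apply Rmult_le_compat_l.
      have : a * (eps / (2 * (a + 1))) <= eps / 2.
        have -> : a * (eps / (2 * (a + 1))) = eps / 2 - eps / (2 * (a + 1)) by field; lra.
        have : 0 < eps / (2 * (a + 1)) by apply Rdiv_lt_0_compat; lra. lra.
      lra.
    nra.
  have HFr' : Rabs (V (G (t + h)) - V (G t) - (h * dot Gr D + dot Gr Rv)) <= eps1 * norm Dl by exact HFr.
  clear HFr Edot EDl.
  clearbody Dl Rv Gr.
  lra.
have -> : (V (G (t + h)) - V (G t)) / h - dot Gr D = (V (G (t + h)) - V (G t) - h * dot Gr D) / h by field.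
rewrite /Rdiv Rabs_mult Rabs_inv.
apply (Rmult_lt_reg_r (Rabs h)) => //.
have -> : Rabs (V (G (t + h)) - V (G t) - h * dot Gr D) * / Rabs h * Rabs h = Rabs (V (G (t + h)) - V (G t) - h * dot Gr D) by field; lra.
done.
Qed.

Lemma deriv_exp_lin k t : derivable_pt_lim (fun s => exp (k * s)) t (k * exp (k * t)).
Proof.
have H1 : derivable_pt_lim (fun s => k * s) t k.
  have := derivable_pt_lim_scal id k t 1 (derivable_pt_lim_id t).
  rewrite Rmult_1_r. apply deriv_ext => s. done.
have := derivable_pt_lim_comp (fun s => k * s) exp t k (exp (k * t)) H1 (derivable_pt_lim_exp _).
rewrite Rmult_comm. apply deriv_ext => s. done.
Qed.

Lemma cwin_exp_lin k a b t : cwin (fun s => exp (k * s)) a b t.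
Proof.
apply cwin_of_cont. apply derivable_continuous_pt.
exists (k * exp (k * t)). apply deriv_exp_lin.
Qed.

Lemma gronwall (N N' : R -> R) k s : 0 <= s ->
  (forall t, 0 <= t <= s -> cwin N 0 s t) ->
  (forall t, 0 < t < s -> derivable_pt_lim N t (N' t)) ->
  (forall t, 0 < t < s -> N' t <= k * N t) ->
  N s * exp (- k * s) <= N 0.
Proof.
move=> Hs Hc Hd Hb.
have := @mono (fun t => N t * exp (- k * t)) (fun t => N' t * exp (- k * t) + N t * (- k * exp (- k * t))) 0 s Hs
  ltac:(move=> t Ht; apply cwin_mult; [by apply Hc|apply (cwin_exp_lin (- k) 0 s t)])
  ltac:(move=> t Ht; apply (derivable_pt_lim_mult N (fun t => exp (- k * t))); [by apply Hd|apply (deriv_exp_lin (- k) t)])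
  ltac:(move=> t Ht; have := Hb t Ht; have := exp_pos (- k * t); nra).
rewrite Rmult_0_r exp_0 Rmult_1_r //.
Qed.

Section Traj.
Variables (n : nat) (f : vec n -> vec n) (gam : R -> vec n) (x : vec n) (h : R).
Hypothesis Hsol : is_solution f gam x h.

Lemma sol_cwin i a b t : 0 <= a -> b <= h -> a <= t <= b -> cwin (fun s => gam s i) a b t.
Proof.
move=> Ha Hb Ht. case: Hsol => _ [Hc _].
apply: (cwin_sub (a := 0) (b := h)) => //. apply cwin_of_cont_in, Hc; lra.
Qed.

Lemma sol_der i t : 0 < t < h -> derivable_pt_lim (fun s => gam s i) t (f (gam t) i).
Proof. case: Hsol => _ [_ Hd]. apply Hd. Qed.

Lemma sol_V (V : vec n -> R) gV c s : has_gradient V gV -> 0 <= s <= h ->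
  (forall t, 0 < t < s -> c <= - dot (gV (gam t)) (f (gam t))) ->
  V (gam s) <= V x - c * s.
Proof.
move=> HV Hs Hb.
have Hc := grad_cont HV.
have := @mono (fun t => V (gam t) + c * t) (fun t => dot (gV (gam t)) (f (gam t)) + c) 0 s ltac:(lra)
  ltac:(move=> t Ht; apply cwin_plus; [apply cwin_comp => // i; apply sol_cwin; lra|
        apply cwin_mult; [apply cwin_const|apply cwin_id]])
  ltac:(move=> t Ht; apply derivable_pt_lim_plus;
        [apply deriv_chain => // i; apply sol_der; lra|
         have := derivable_pt_lim_scal id c t 1 (derivable_pt_lim_id t); rewrite Rmult_1_r;
         apply deriv_ext => u; done])
  ltac:(move=> t Ht; have := Hb t Ht; lra).
case: Hsol => -> _. lra.
Qed.

Lemma sol_N_up L s : 0 <= s <= h ->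
  (forall t, 0 < t < s -> dot (gam t) (f (gam t)) <= L * dot (gam t) (gam t)) ->
  dot (gam s) (gam s) <= dot x x * exp (2 * L * s).
Proof.
move=> Hs Hb.
have H1 : forall t, 0 <= t <= s -> cwin (fun t => dot (gam t) (gam t)) 0 s t.
  move=> t Ht; apply cwin_dot_self => i; apply sol_cwin; lra.
have H2 : forall t, 0 < t < s -> derivable_pt_lim (fun t => dot (gam t) (gam t)) t (2 * dot (gam t) (f (gam t))).
  move=> t Ht; apply deriv_dot_self => i; apply sol_der; lra.
have H3 : forall t, 0 < t < s -> 2 * dot (gam t) (f (gam t)) <= (2 * L) * dot (gam t) (gam t).
  move=> t Ht; have := Hb t Ht; lra.
have := @gronwall (fun t => dot (gam t) (gam t)) (fun t => 2 * dot (gam t) (f (gam t))) (2 * L) s ltac:(lra) H1 H2 H3.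
case: Hsol => -> _ H.
have E : exp (- (2 * L) * s) * exp (2 * L * s) = 1.
  rewrite -exp_plus. have -> : - (2 * L) * s + 2 * L * s = 0 by ring. apply exp_0.
have He := exp_pos (2 * L * s).
have := Rmult_le_compat_r _ _ _ (Rlt_le _ _ He) H.
rewrite (Rmult_assoc (dot (gam s) (gam s))) E Rmult_1_r. done.
Qed.

Lemma sol_N_down L s : 0 <= s <= h ->
  (forall t, 0 < t < s -> - L * dot (gam t) (gam t) <= dot (gam t) (f (gam t))) ->
  dot x x * exp (- (2 * L * s)) <= dot (gam s) (gam s).
Proof.
move=> Hs Hb.
have H1 : forall t, 0 <= t <= s -> cwin (fun t => - dot (gam t) (gam t)) 0 s t.
  move=> t Ht; apply cwin_opp, cwin_dot_self => i; apply sol_cwin; lra.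
have H2 : forall t, 0 < t < s -> derivable_pt_lim (fun t => - dot (gam t) (gam t)) t (- (2 * dot (gam t) (f (gam t)))).
  move=> t Ht; apply derivable_pt_lim_opp with (f := fun t => dot (gam t) (gam t)).
  apply deriv_dot_self => i; apply sol_der; lra.
have H3 : forall t, 0 < t < s -> - (2 * dot (gam t) (f (gam t))) <= (- (2 * L)) * (- dot (gam t) (gam t)).
  move=> t Ht; have := Hb t Ht; lra.
have := @gronwall (fun t => - dot (gam t) (gam t)) (fun t => - (2 * dot (gam t) (f (gam t)))) (- (2 * L)) s ltac:(lra) H1 H2 H3.
case: Hsol => -> _ H.
have E : exp (- - (2 * L) * s) * exp (- (2 * L * s)) = 1.
  rewrite -exp_plus. have -> : - - (2 * L) * s + - (2 * L * s) = 0 by ring. apply exp_0.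
have He := exp_pos (- (2 * L * s)).
have H' : dot x x <= dot (gam s) (gam s) * exp (- - (2 * L) * s) by lra.
have := Rmult_le_compat_r _ _ _ (Rlt_le _ _ He) H'.
rewrite (Rmult_assoc (dot (gam s) (gam s))) E Rmult_1_r. done.
Qed.

Lemma sol_dir (u : vec n) K s : 0 <= s <= h ->
  (forall t, 0 < t < s -> dot u (f (gam t)) <= K) ->
  dot u (gam s) - K * s <= dot u x.
Proof.
move=> Hs Hb.
have := @mono (fun t => dot u (gam t) + (- K) * t) (fun t => dot u (f (gam t)) + - K) 0 s ltac:(lra)
  ltac:(move=> t Ht; apply cwin_plus; [apply cwin_dot_l => i; apply sol_cwin; lra|
        apply cwin_mult; [apply cwin_const|apply cwin_id]])
  ltac:(move=> t Ht; apply derivable_pt_lim_plus;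
        [apply deriv_dot_l => i; apply sol_der; lra|
         have := derivable_pt_lim_scal id (- K) t 1 (derivable_pt_lim_id t); rewrite Rmult_1_r;
         apply deriv_ext => v; done])
  ltac:(move=> t Ht; have := Hb t Ht; lra).
case: Hsol => -> _. lra.
Qed.

End Traj.

Lemma exp_le a c : a <= c -> exp a <= exp c.
Proof. case=> H; [apply Rlt_le, exp_increasing, H|rewrite H; lra]. Qed.

Lemma exp_double a : exp (2 * a) = exp a * exp a.
Proof. rewrite -exp_plus; f_equal; ring. Qed.

Lemma sqrt_le_norm n (v : vec n) c : 0 <= c -> dot v v <= c * c -> norm v <= c.
Proof.
move=> Hc H. rewrite /norm -(sqrt_square c Hc). apply sqrt_le_1_alt, H.
Qed.

Lemma norm_ge_sqrt n (v : vec n) c : 0 <= c -> c * c <= dot v v -> c <= norm v.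
Proof.
move=> Hc H. rewrite /norm -(sqrt_square c Hc). apply sqrt_le_1_alt, H.
Qed.

Lemma traj_bounds n (f : vec n -> vec n) V gV gam x h L b :
  has_gradient V gV -> (forall y, dot (gV y) (f y) <= 0) ->
  (forall y, V y <= V x -> norm (f y) <= L * norm y) -> 0 <= L -> L * h <= b ->
  is_solution f gam x h ->
  forall s, 0 <= s <= h -> V (gam s) <= V x /\ norm (f (gam s)) <= L * norm (gam s) /\
     norm (gam s) <= exp b * norm x /\ exp (- b) * norm x <= norm (gam s).
Proof.
move=> HV Hneg Hfb HL HLh Hsol.
have Vs : forall s, 0 <= s <= h -> V (gam s) <= V x.
  move=> s Hs. have := sol_V (c := 0) Hsol HV Hs (fun t Ht => ltac:(have := Hneg (gam t); lra)). lra.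
have Fs : forall s, 0 <= s <= h -> norm (f (gam s)) <= L * norm (gam s).
  move=> s Hs; apply Hfb, Vs, Hs.
have Dup : forall t, 0 <= t <= h -> dot (gam t) (f (gam t)) <= L * dot (gam t) (gam t).
  move=> t Ht. have := dot_le_norm (gam t) (f (gam t)). have := Fs t Ht.
  rewrite -norm_sq. have := norm_nonneg (gam t). nra.
have Ddn : forall t, 0 <= t <= h -> - L * dot (gam t) (gam t) <= dot (gam t) (f (gam t)).
  move=> t Ht. have := CS (gam t) (f (gam t)). have := Fs t Ht.
  rewrite -norm_sq. have := norm_nonneg (gam t).
  move=> H1 H2 H3.
  have H4 := Rle_abs (- dot (gam t) (f (gam t))). rewrite Rabs_Ropp in H4. nra.
have Hx := norm_nonneg x.
have Heb := exp_pos b. have Hemb := exp_pos (- b).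
move=> s Hs. split; [by apply Vs|split; [by apply Fs|split]].
- apply sqrt_le_norm; first nra.
  have := sol_N_up (L := L) Hsol Hs (fun t Ht => Dup t ltac:(lra)).
  have : exp (2 * L * s) <= exp (2 * b) by apply exp_le; nra.
  rewrite exp_double -(norm_sq x). move=> H1 H2.
  have H3 := Rmult_le_pos _ _ Hx Hx.
  have : norm x * norm x * exp (2 * L * s) <= norm x * norm x * (exp b * exp b) by apply Rmult_le_compat_l.
  lra.
- apply norm_ge_sqrt; first nra.
  have := sol_N_down (L := L) Hsol Hs (fun t Ht => Ddn t ltac:(lra)).
  have : exp (2 * - b) <= exp (- (2 * L * s)) by apply exp_le; nra.
  rewrite exp_double -(norm_sq x). move=> H1 H2.
  have H3 := Rmult_le_pos _ _ Hx Hx.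
  have : norm x * norm x * (exp (- b) * exp (- b)) <= norm x * norm x * exp (- (2 * L * s)) by apply Rmult_le_compat_l.
  lra.
Qed.

Lemma list_max (l : list nat) : exists K, forall k, List.In k l -> le k K.
Proof.
elim: l => [|a l [K HK]]; first by exists O => k [].
exists (Nat.max a K) => k [<-|Hk]; [apply Nat.le_max_l|].
eapply Nat.le_trans; [apply HK, Hk|apply Nat.le_max_r].
Qed.

Lemma pos_inf_compact n (g : vec n -> R) (V : vec n -> R) M r :
  cont_scalar g -> (forall y, y <> vzero -> 0 < g y) -> Defs.compact (fun y => V y <= M) -> 0 < r ->
  exists m, 0 < m /\ forall y, V y <= M -> r <= norm y -> m <= g y.
Proof.
move=> Hg Hp Hc Hr.
set U := fun (k : nat) (y : vec n) => / (INR k + 1) < g y \/ norm y < r.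
have Hopen : forall k, is_open (U k).
  move=> k y0 [H|H].
  - have [d [Hd Hdd]] := Hg y0 (g y0 - / (INR k + 1)) ltac:(lra).
    exists d; split => // y Hy. left. have := Hdd y Hy. move/Rabs_def2 => [H1 H2]. lra.
  - exists (r - norm y0); split; first lra.
    move=> y Hy. right. rewrite /ball in Hy.
    have := norm_vsub_triang y y0 vzero. rewrite !vsub_zero. lra.
have Hcov : forall y, V y <= M -> exists k, U k y.
  move=> y _. case: (Rlt_le_dec (norm y) r) => Hy; first by exists O; right.
  have Hy0 : y <> vzero by move=> E; rewrite E norm_zero in Hy; lra.
  have [N [HN HN0]] := archimed_cor1 (g y) (Hp y Hy0).
  exists N; left.
  have HN' : 0 < INR N by apply lt_0_INR.
  eapply Rlt_trans; last by exact HN.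
  apply Rinv_lt_contravar; [nra|lra].
have [l Hl] := Hc nat U Hopen Hcov.
have [K HK] := list_max l.
exists (/ (INR K + 1)); split; first by apply Rinv_0_lt_compat; have := pos_INR K; lra.
move=> y HyV Hyr.
have [k [Hk [H|H]]] := Hl y HyV; last by lra.
have := HK k Hk => Hle. have := le_INR _ _ Hle. have := pos_INR k.
move=> H1 H2.
have : / (INR K + 1) <= / (INR k + 1) by apply Rinv_le_contravar; lra.
lra.
Qed.

Lemma Rmax_shift p q : Rmax 0 p <= Rmax 0 q + Rabs (p - q).
Proof.
apply Rmax_lub.
- have := Rmax_l 0 q. have := Rabs_pos (p - q). lra.
- have := Rmax_r 0 q. have := Rle_abs (p - q). lra.
Qed.

Lemma part_ii_Wt n (g V : vec n -> R) b :
  cont_scalar g -> (forall y, 0 <= g y) -> g vzero = 0 -> (forall y, y <> vzero -> 0 < g y) ->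
  cont_scalar V -> V vzero = 0 -> (forall y, 0 <= V y) ->
  (forall M, Defs.compact (fun y => V y <= M)) -> 0 < b ->
  exists Wt : vec n -> R, cont_scalar Wt /\ positive_definite Wt /\ (forall x, 0 <= Wt x) /\
    forall x y, exp (- b) * norm x <= norm y -> V y <= V x -> Wt x <= g y.
Proof.
move=> Hgc Hgn Hg0 Hgp HVc HV0 HVn Hcomp Hb.
set F := fun x y => g y + Rmax 0 (exp (- b) * norm x - norm y) + Rmax 0 (V y - V x).
have Fnn : forall x y, 0 <= F x y.
  move=> x y; rewrite /F; have := Hgn y; have := Rmax_l 0 (exp (- b) * norm x - norm y);
  have := Rmax_l 0 (V y - V x); lra.
set Wt := fun x => inf0 (F x).
have Wle : forall x y, Wt x <= F x y.
  move=> x y; rewrite /Wt -(Rmax0_id (Fnn x y)); apply inf0_le.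
have Hemb := exp_pos (- b).
have Hemb1 : exp (- b) <= 1 by rewrite -exp_0; apply exp_le; lra.
exists Wt; split; [|split; [split|split]].
-
  have key : forall x x', Wt x <= Wt x' + (Rabs (norm x - norm x') + Rabs (V x - V x')).
    move=> x x'. apply inf0_mono; first by have := Rabs_pos (norm x - norm x'); have := Rabs_pos (V x - V x'); lra.
    move=> y. rewrite /F.
    have := Rmax_shift (exp (- b) * norm x - norm y) (exp (- b) * norm x' - norm y).
    have := Rmax_shift (V y - V x) (V y - V x').
    have -> : exp (- b) * norm x - norm y - (exp (- b) * norm x' - norm y) = exp (- b) * (norm x - norm x') by ring.
    have -> : V y - V x - (V y - V x') = - (V x - V x') by ring.
    rewrite Rabs_mult Rabs_Ropp (Rabs_right (exp (- b))); last lra.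
    have : exp (- b) * Rabs (norm x - norm x') <= Rabs (norm x - norm x').
      have := Rabs_pos (norm x - norm x'). nra.
    lra.
  move=> x eps Heps.
  have [d [Hd Hdd]] := HVc x (eps / 2) ltac:(lra).
  exists (Rmin d (eps / 2)); split; first by apply Rmin_pos; lra.
  move=> y Hy.
  have Hy1 : norm (vsub y x) < d by have := Rmin_l d (eps / 2); lra.
  have Hy2 : norm (vsub y x) < eps / 2 by have := Rmin_r d (eps / 2); lra.
  have H1 := Hdd y Hy1. have H2 := norm_rev_triang y x.
  have K1 := key y x. have K2 := key x y.
  rewrite (Rabs_minus_sym (norm x)) (Rabs_minus_sym (V x)) in K2.
  apply Rabs_def1; lra.
- apply Rle_antisym; last by rewrite /Wt; apply inf0_nonneg.
  have := Wle vzero vzero. rewrite /F Hg0 norm_zero HV0.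
  have -> : exp (- b) * 0 - 0 = 0 by ring.
  have -> : 0 - 0 = 0 by ring.
  have -> : Rmax 0 0 = 0 by apply Rmax_left; lra.
  lra.
- move=> x Hx.
  have Hnx := norm_pos Hx.
  remember (exp (- b) * norm x / 2) as r eqn:Er.
  have Hr : 0 < r by rewrite Er; nra.
  have [m [Hm Hmm]] := @pos_inf_compact n g V (V x + 1) r Hgc Hgp (Hcomp (V x + 1)) Hr.
  apply Rlt_le_trans with (Rmin m (Rmin r 1)); first by repeat apply Rmin_pos; lra.
  apply inf0_ge => y. rewrite Rmax0_id; last by apply Fnn.
  rewrite /F.
  have P1 := Hgn y. have P2 := Rmax_l 0 (exp (- b) * norm x - norm y). have P3 := Rmax_l 0 (V y - V x).
  have Q1 := Rmin_l m (Rmin r 1). have Q2 := Rmin_r m (Rmin r 1). have Q3 := Rmin_l r 1. have Q4 := Rmin_r r 1.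
  case: (Rle_lt_dec (V y) (V x + 1)) => HVy.
  + case: (Rle_lt_dec r (norm y)) => Hny.
    * have := Hmm y HVy Hny. lra.
    * have := Rmax_r 0 (exp (- b) * norm x - norm y). lra.
  + have := Rmax_r 0 (V y - V x). lra.
- move=> x; apply inf0_nonneg.
- move=> x y H1 H2. have := Wle x y. rewrite /F !Rmax_left; lra.
Qed.

Lemma lf_bound n (f : vec n -> vec n) (V : vec n -> R) (lf : vec n -> R) x :
  f vzero = vzero -> V vzero = 0 -> (forall y, 0 <= V y) -> x <> vzero -> 0 <= lf x ->
  (forall x, x <> vzero -> forall y z, y <> z -> Rmax (V y) (V z) <= V x ->
        norm (vsub (f y) (f z)) / norm (vsub y z) <= lf x) ->
  forall y, V y <= V x -> norm (f y) <= lf x * norm y.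
Proof.
move=> Hf0 HV0 HVn Hx HL Hlf y Hy.
case: (classic (y = vzero)) => Hy0.
- rewrite Hy0 Hf0 norm_zero; lra.
- have := Hlf x Hx y vzero Hy0 ltac:(apply Rmax_lub; [lra|rewrite HV0; apply HVn]).
  rewrite Hf0 !vsub_zero => H.
  have Hn := norm_pos Hy0.
  have := Rmult_le_compat_r _ _ _ (Rlt_le _ _ Hn) H.
  have -> : norm (f y) / norm y * norm y = norm (f y) by field; lra.
  done.
Qed.

Lemma le_div_mul h b L : 0 < L -> h <= b / L -> L * h <= b.
Proof.
move=> HL H. have := Rmult_le_compat_l _ _ _ (Rlt_le _ _ HL) H.
have -> : L * (b / L) = b by field; lra. done.
Qed.

Lemma phi_alg (lWx L nx eb Wx lam ph : R) :
  0 < lWx -> 0 < L -> 0 < nx -> 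
  ph <= (1 - lam) * exp (- eb) * Wx / (nx * lWx * L) ->
  lWx * (L * exp eb * nx) * ph <= (1 - lam) * Wx.
Proof.
move=> H1 H2 H3 H.
have He := exp_pos eb.
have HP : 0 < lWx * (L * exp eb * nx).
  apply Rmult_lt_0_compat => //. apply Rmult_lt_0_compat => //. apply Rmult_lt_0_compat => //.
have := Rmult_le_compat_l _ _ _ (Rlt_le _ _ HP) H.
have -> : lWx * (L * exp eb * nx) * ((1 - lam) * exp (- eb) * Wx / (nx * lWx * L)) = (1 - lam) * Wx * (exp eb * exp (- eb)).
  field; lra.
rewrite -exp_plus. have -> : eb + - eb = 0 by ring. rewrite exp_0 Rmult_1_r. done.
Qed.

Unset Implicit Arguments.

Theorem lemma4p3 (n : nat) (f : vec n -> vec n) (V : vec n -> R)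
    (gradV : vec n -> vec n)
    (Hf_lip : locally_lipschitz_vec f) (Hf0 : f vzero = vzero)
    (HV : lyapunov f V gradV) :
  (* (i) *)
  (exists W : vec n -> R,
     locally_lipschitz_scalar W /\ positive_definite W /\ (forall x, 0 <= W x) /\
     forall x, W x <= - dot (gradV x) (f x))
  /\
  (* (ii) *)
  (forall lf : vec n -> R,
     cont_scalar lf -> (forall x, 0 < lf x) ->
     (forall x, x <> vzero -> forall y z, y <> z -> Rmax (V y) (V z) <= V x ->
        norm (vsub (f y) (f z)) / norm (vsub y z) <= lf x) ->
     forall b, 0 < b ->
     exists Wt : vec n -> R,
       cont_scalar Wt /\ positive_definite Wt /\ (forall x, 0 <= Wt x) /\
       forall x h, 0 <= h <= b / lf x ->
       forall gam, is_solution f gam x h ->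
         V (gam h) <= V x - h * Wt x)
  /\
  (* (iii) *)
  (forall (b : R) (lf W lW : vec n -> R),
     0 < b ->
     cont_scalar lf -> (forall x, 0 < lf x) ->
     (forall x, x <> vzero -> forall y z, y <> z -> Rmax (V y) (V z) <= V x ->
        norm (vsub (f y) (f z)) / norm (vsub y z) <= lf x) ->
     locally_lipschitz_scalar W -> positive_definite W -> (forall x, 0 <= W x) ->
     (forall x, W x <= - dot (gradV x) (f x)) ->
     cont_scalar lW -> positive_definite lW -> (forall x, 0 <= lW x) ->
     (forall x, x <> vzero -> forall y z, y <> z ->
        Rmax (norm y) (norm z) <= exp b * norm x ->
        Rabs (W y - W z) / norm (vsub y z) <= lW x) ->
     (exists eps c, 0 < eps /\ 0 < c /\
        forall x, ball vzero eps x -> norm x * lW x <= c * W x) ->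
     forall (lam : R) (phi : vec n -> R),
       0 < lam < 1 ->
       cont_scalar phi -> (forall x, 0 < phi x) ->
       (forall x, x <> vzero ->
          phi x <= Rmin (b / lf x)
                        ((1 - lam) * exp (- b) * W x / (norm x * lW x * lf x))) ->
       forall x h, 0 <= h <= phi x ->
       forall gam, is_solution f gam x h ->
         V (gam h) <= V x - lam * h * W x).
Proof.
case: HV => [[HgV HgVc] [HVn [[HV0 HVp] [Hru Hneg]]]].
have Hfc : cont_vec f := lip_cont Hf_lip.
have Hgc : cont_scalar (fun y => - dot (gradV y) (f y)).
  move=> y eps Heps. have [d [Hd Hdd]] := cont_dot HgVc Hfc y Heps.
  exists d; split => // z Hz. have := Hdd z Hz.
  have -> : - dot (gradV z) (f z) - - dot (gradV y) (f y) = - (dot (gradV z) (f z) - dot (gradV y) (f y)) by ring.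
  by rewrite Rabs_Ropp.
have Hg0 : - dot (gradV vzero) (f vzero) = 0 by rewrite Hf0 dot_zero_r; ring.
have Hgp : forall y, y <> vzero -> 0 < - dot (gradV y) (f y) by move=> y Hy; have := Hneg y Hy; lra.
have Hgn : forall y, 0 <= - dot (gradV y) (f y).
  move=> y. case: (classic (y = vzero)) => Hy; [rewrite Hy Hg0; lra|have := Hgp y Hy; lra].
have Hneg' : forall y, dot (gradV y) (f y) <= 0 by move=> y; have := Hgn y; lra.
split; [|split].
-
  exact (part_i_gen Hgc Hgn Hg0 Hgp).
-
  move=> lf Hlfc Hlfp Hlf b Hb.
  have [Wt [Hc [Hpd [Hnn Hkey]]]] := @part_ii_Wt n (fun y => - dot (gradV y) (f y)) V b Hgc Hgn Hg0 Hgp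
     (grad_cont HgV) HV0 HVn Hru Hb.
  exists Wt; split; [done|split; [done|split; [done|]]].
  move=> x h Hh gam Hsol.
  case: (classic (x = vzero)) => Hx.
  + have Hw0 : Wt x = 0 by rewrite Hx; case: Hpd.
    have := sol_V (c := 0) (s := h) Hsol HgV ltac:(split; [lra|apply Rle_refl]) (fun t Ht => Hgn _).
    rewrite Hw0. lra.
  + have HL := Hlfp x.
    have Hfb := @lf_bound n f V lf x Hf0 HV0 HVn Hx (Rlt_le _ _ HL) Hlf.
    have HLh : lf x * h <= b by apply le_div_mul; lra.
    have Hbd := @traj_bounds n f V gradV gam x h (lf x) b HgV Hneg' Hfb (Rlt_le _ _ HL) HLh Hsol.
    have := sol_V (c := Wt x) (s := h) Hsol HgV ltac:(split; [lra|apply Rle_refl])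
      (fun t Ht => ltac:(have [H1 [_ [_ H4]]] := Hbd t ltac:(lra); exact (Hkey x (gam t) H4 H1))).
    lra.
-
  move=> b lf W lW Hb Hlfc Hlfp Hlf HWl HWpd HWn HWg HlWc HlWpd HlWn HlWb _ lam phi Hlam Hphic Hphip Hphi.
  move=> x h Hh gam Hsol.
  case: (classic (x = vzero)) => Hx.
  + have Hw0 : W x = 0 by rewrite Hx; case: HWpd.
    have := sol_V (c := 0) (s := h) Hsol HgV ltac:(split; [lra|apply Rle_refl]) (fun t Ht => Hgn _).
    rewrite Hw0. lra.
  + have HL := Hlfp x.
    have Hfb := @lf_bound n f V lf x Hf0 HV0 HVn Hx (Rlt_le _ _ HL) Hlf.
    have Hph := Hphi x Hx.
    have Hph1 : phi x <= b / lf x by have := Rmin_l (b / lf x) ((1 - lam) * exp (- b) * W x / (norm x * lW x * lf x)); lra.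
    have Hph2 : phi x <= (1 - lam) * exp (- b) * W x / (norm x * lW x * lf x)
      by have := Rmin_r (b / lf x) ((1 - lam) * exp (- b) * W x / (norm x * lW x * lf x)); lra.
    have HLh : lf x * h <= b by apply le_div_mul; lra.
    have Hbd := @traj_bounds n f V gradV gam x h (lf x) b HgV Hneg' Hfb (Rlt_le _ _ HL) HLh Hsol.
    have Hnx := @norm_pos n x Hx.
    have HlWx : 0 < lW x by case: HlWpd => _ H; apply H.
    have Heb1 : 1 <= exp b by rewrite -exp_0; apply exp_le; lra.
    have HWx := HWn x.
    have key : forall t, 0 < t < h -> lam * W x <= W (gam t).
      move=> t Ht.
      case: (classic (gam t = x)) => Hgx; first by rewrite Hgx; nra.
      have Hdist : norm (vsub (gam t) x) <= lf x * exp b * norm x * t.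
        have Hnu := norm_nonneg (vsub (gam t) x).
        have Hb' : forall t', 0 < t' < t -> dot (vsub (gam t) x) (f (gam t')) <= norm (vsub (gam t) x) * (lf x * exp b * norm x).
          move=> t' Ht'.
          have [_ [H2 [H3 _]]] := Hbd t' ltac:(lra).
          have C := dot_le_norm (vsub (gam t) x) (f (gam t')).
          have Hnf := norm_nonneg (f (gam t')).
          have H5 : norm (f (gam t')) <= lf x * exp b * norm x.
            have := Rmult_le_compat_l _ _ _ (Rlt_le _ _ HL) H3. lra.
          have := Rmult_le_compat_l _ _ _ Hnu H5. lra.
        have := sol_dir (u := vsub (gam t) x) (K := norm (vsub (gam t) x) * (lf x * exp b * norm x)) (s := t) Hsol
          ltac:(lra) Hb'.
        move=> H.
        have E1 := dot_vsub_r (gam t) x (vsub (gam t) x).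
        have E2 := norm_sq (vsub (gam t) x).
        have Hpos : 0 < norm (vsub (gam t) x).
          apply norm_pos => E. apply Hgx. apply functional_extensionality => i.
          have := f_equal (fun v => v i) E. rewrite /vsub /vzero. lra.
        apply (Rmult_le_reg_l (norm (vsub (gam t) x))) => //.
        have -> : norm (vsub (gam t) x) * (lf x * exp b * norm x * t) = norm (vsub (gam t) x) * (lf x * exp b * norm x) * t by ring.
        lra.
      have [_ [_ [H3 _]]] := Hbd t ltac:(lra).
      have Hmax : Rmax (norm (gam t)) (norm x) <= exp b * norm x by apply Rmax_lub; nra.
      have HW := HlWb x Hx (gam t) x Hgx Hmax.
      have Hpos : 0 < norm (vsub (gam t) x).
        apply norm_pos => E. apply Hgx. apply functional_extensionality => i.
        have := f_equal (fun v => v i) E. rewrite /vsub /vzero. lra.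
      have HW' : Rabs (W (gam t) - W x) <= lW x * norm (vsub (gam t) x).
        have := Rmult_le_compat_r _ _ _ (Rlt_le _ _ Hpos) HW.
        have -> : Rabs (W (gam t) - W x) / norm (vsub (gam t) x) * norm (vsub (gam t) x) = Rabs (W (gam t) - W x) by field; lra.
        done.
      have Hal := @phi_alg (lW x) (lf x) (norm x) b (W x) lam (phi x) HlWx HL Hnx Hph2.
      have : lW x * norm (vsub (gam t) x) <= lW x * (lf x * exp b * norm x * t) by apply Rmult_le_compat_l; lra.
      have : lW x * (lf x * exp b * norm x) * t <= lW x * (lf x * exp b * norm x) * phi x.
        apply Rmult_le_compat_l; first by have := exp_pos b; have := Rlt_le _ _ HL; nra.
        lra.
      have := Rle_abs (W x - W (gam t)). rewrite Rabs_minus_sym. nra.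
    have := sol_V (c := lam * W x) (s := h) Hsol HgV ltac:(split; [lra|apply Rle_refl])
      (fun t Ht => ltac:(have := key t Ht; have := HWg (gam t); lra)).
    lra.
Qed.
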